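(* Let $A_\star,\hat A\in\mathbb{R}^{n\times n}$, $B_\star,\hat B\in\mathbb{R}^{n\times m}$. For any $P_1,P_2\in\mathbb{S}^n_+$ and any integer $i\ge0$, define $\hat P_{(i)}=\mathcal{R}^{(i)}_{\hat A,\hat B}(P_1)$ and $P_{(i)}=\mathcal{R}^{(i)}_{A_\star,B_\star}(P_2)$. Then $$\hat P_{(i)}-P_{(i)}=\big[\Phi^{(0:i)}_{\hat A,\hat B}(P_1)\big]^\top(P_1-P_2)\,\bar\Phi^{(0:i)}(P_2)+\sum_{j=1}^{i}\big[\Phi^{(i-j+1:i)}_{\hat A,\hat B}(P_1)\big]^\top\mathcal{M}\big(\hat P_{(i-j)},P_{(i-j)}\big)\,\bar\Phi^{(i-j+1:i)}(P_2),$$ where for $P_1,P_2\in\mathbb{S}^n_+$, $$\mathcal{M}(P_1,P_2)=\hat A^\top P_2(I+S_{B_\star}P_2)^{-1}\hat A-A_\star^\top P_2(I+S_{B_\star}P_2)^{-1}A_\star+\hat A^\top(I+P_1S_{\hat B})^{-1}P_2(S_{B_\star}-S_{\hat B})P_2(I+S_{B_\star}P_2)^{-1}\hat A.$$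
   Context: $R\in\mathbb{S}^m_{++}$, $Q\in\mathbb{S}^n_+$. $S_B=BR^{-1}B^\top$. Riccati map $\mathcal{R}_{A,B}(P)=A^\top P(I+S_BP)^{-1}A+Q$ on $\mathbb{S}^n_+$, iterates $\mathcal{R}^{(0)}_{A,B}=\mathrm{id}$, $\mathcal{R}^{(i+1)}_{A,B}=\mathcal{R}_{A,B}\circ\mathcal{R}^{(i)}_{A,B}$. $\mathcal{K}_{A,B}(F)=(R+B^\top FB)^{-1}B^\top FA$ and $\mathcal{L}_{A,B}(P)=(I+S_BP)^{-1}A=A-B\mathcal{K}_{A,B}(P)$. For integers $0\le j\le i$: $\Phi^{(j:i)}_{A,B}(P)=\mathcal{L}_{A,B}(\mathcal{R}^{(j)}_{A,B}(P))\cdots\mathcal{L}_{A,B}(\mathcal{R}^{(i-1)}_{A,B}(P))$ if $i>j$, and $=I$ if $i=j$. Define $\mathcal{W}(P)=I+(S_{B_\star}-S_{\hat B})P$, $\mathcal{H}(P)=(I+S_{B_\star}P)^{-1}(\hat A-A_\star)$, $\bar{\mathcal{L}}(P)=\mathcal{W}(P)[\mathcal{H}(P)+\mathcal{L}_{A_\star,B_\star}(P)]$, and $\bar\Phi^{(j:i)}(P)=\bar{\mathcal{L}}(\mathcal{R}^{(j)}_{A_\star,B_\star}(P))\cdots\bar{\mathcal{L}}(\mathcal{R}^{(i-1)}_{A_\star,B_\star}(P))$ if $i>j$, and $=I$ if $i=j$. *)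

(* Defs.v *)
From HB Require Import structures.
From mathcomp Require Import all_boot all_order all_algebra.
Set Implicit Arguments. Unset Strict Implicit. Unset Printing Implicit Defensive.
Import Order.TTheory GRing.Theory Num.Theory.
Local Open Scope ring_scope.

Section Riccati.
Variables (R : realFieldType) (n m : nat).

Definition psd (P : 'M[R]_n) : Prop :=
  P^T = P /\ forall x : 'cV[R]_n, 0 <= (x^T *m P *m x) 0 0.
Definition pdm (P : 'M[R]_m) : Prop :=
  P^T = P /\ forall x : 'cV[R]_m, x != 0 -> 0 < (x^T *m P *m x) 0 0.

Variables (Q : 'M[R]_n) (Rm : 'M[R]_m).

Definition SB (B : 'M[R]_(n, m)) : 'M[R]_n := B *m invmx Rm *m B^T.

Definition ric (A : 'M[R]_n) (B : 'M[R]_(n, m)) (P : 'M[R]_n) : 'M[R]_n :=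
  A^T *m P *m invmx (1%:M + SB B *m P) *m A + Q.

Definition ric_iter (A : 'M[R]_n) (B : 'M[R]_(n, m)) (i : nat) (P : 'M[R]_n) :=
  iter i (ric A B) P.

Definition Kgain (A : 'M[R]_n) (B : 'M[R]_(n, m)) (F : 'M[R]_n) : 'M[R]_(m, n) :=
  invmx (Rm + B^T *m F *m B) *m B^T *m F *m A.

Definition Lcl (A : 'M[R]_n) (B : 'M[R]_(n, m)) (P : 'M[R]_n) : 'M[R]_n :=
  invmx (1%:M + SB B *m P) *m A.

Definition Phi (A : 'M[R]_n) (B : 'M[R]_(n, m)) (j i : nat) (P : 'M[R]_n) : 'M[R]_n :=
  foldr (fun k acc => Lcl A B (ric_iter A B k P) *m acc) 1%:M (iota j (i - j)).

Variables (As Ah : 'M[R]_n) (Bs Bh : 'M[R]_(n, m)).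

Definition Wm (P : 'M[R]_n) : 'M[R]_n := 1%:M + (SB Bs - SB Bh) *m P.
Definition Hm (P : 'M[R]_n) : 'M[R]_n := invmx (1%:M + SB Bs *m P) *m (Ah - As).
Definition Lbar (P : 'M[R]_n) : 'M[R]_n := Wm P *m (Hm P + Lcl As Bs P).

Definition Phibar (j i : nat) (P : 'M[R]_n) : 'M[R]_n :=
  foldr (fun k acc => Lbar (ric_iter As Bs k P) *m acc) 1%:M (iota j (i - j)).

Definition Mm (P1 P2 : 'M[R]_n) : 'M[R]_n :=
  Ah^T *m P2 *m invmx (1%:M + SB Bs *m P2) *m Ah
  - As^T *m P2 *m invmx (1%:M + SB Bs *m P2) *m As
  + Ah^T *m invmx (1%:M + P1 *m SB Bh) *m P2 *m (SB Bs - SB Bh) *m P2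
      *m invmx (1%:M + SB Bs *m P2) *m Ah.

End Riccati.

(* Main.v *)
Require Import Defs.
From HB Require Import structures.
From mathcomp Require Import all_boot all_order all_algebra.
From mathcomp Require Import ring lra zify.
Import Order.TTheory GRing.Theory Num.Theory.
Local Open Scope ring_scope.

Section LA.
Variable R : realFieldType.

Lemma unit_of_ker k (A : 'M[R]_k) :
  (forall x : 'cV_k, A *m x = 0 -> x = 0) -> A \in unitmx.
Proof.
move=> H; rewrite unitmxE unitfE -det_tr; apply/negP => /det0P [v vn0 hv].
have : A *m v^T = 0 by rewrite -[A]trmxK -trmx_mul hv trmx0.
move/H => /(congr1 trmx); rewrite trmxK trmx0 => v0.
by rewrite v0 eqxx in vn0.
Qed.

Lemma sq_eq0 k (y : 'cV[R]_k) : (y^T *m y) 0 0 = 0 -> y = 0.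
Proof.
rewrite mxE => h.
have hF : forall j : 'I_k, true -> 0 <= y^T 0 j * y j 0.
  by move=> j _; rewrite mxE -expr2 sqr_ge0.
apply/matrixP => j l; rewrite (ord1 l) mxE.
have := psumr_eq0P hF h (i:=j) isT.
by rewrite mxE => /eqP; rewrite mulf_eq0 orbb => /eqP.
Qed.

Lemma trB p q (A B : 'M[R]_(p,q)) : (A - B)^T = A^T - B^T.
Proof. by apply/matrixP => i j; rewrite !mxE. Qed.
Lemma trD p q (A B : 'M[R]_(p,q)) : (A + B)^T = A^T + B^T.
Proof. by apply/matrixP => i j; rewrite !mxE. Qed.
Lemma trZ p q c (A : 'M[R]_(p,q)) : (c *: A)^T = c *: A^T.
Proof. by apply/matrixP => i j; rewrite !mxE. Qed.

Lemma entry_tr11 (M : 'M[R]_1) : M^T 0 0 = M 0 0.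
Proof. by rewrite mxE. Qed.

Lemma psd_ker k (P : 'M[R]_k) (x : 'cV_k) : P^T = P ->
  (forall y : 'cV_k, 0 <= (y^T *m P *m y) 0 0) ->
  (x^T *m P *m x) 0 0 = 0 -> P *m x = 0.
Proof.
move=> Ps Pp qx.
set y := P *m x.
set a := (y^T *m y) 0 0.
set b := (y^T *m P *m y) 0 0.
have ha : (y^T *m P *m x) 0 0 = a by rewrite -mulmxA.
have hxy : (x^T *m P *m y) 0 0 = a.
  by rewrite /a /y trmx_mul Ps !mulmxA.
have key t : 0 <= - t * a - t * a + t ^+ 2 * b.
  have := Pp (x - t *: y).
  rewrite trB trZ !mulmxBl !mulmxBr.
  do 3 rewrite -?scalemxAl -?scalemxAr.
  rewrite [x^T *m P *m x]mx11_scalar [x^T *m P *m y]mx11_scalar.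
  rewrite [y^T *m P *m x]mx11_scalar [y^T *m P *m y]mx11_scalar.
  rewrite qx ha hxy -/b !mxE /= !mulr1n; rewrite expr2; lra.
have := key (a / (b + 1)).
have b0 : 0 <= b by apply: Pp.
set u := a / (b + 1).
have hu : a = u * (b + 1) by rewrite /u mulfVK // gt_eqF //; lra.
rewrite hu => h.
have : u ^+ 2 * (b + 2) <= 0 by nra.
have : u = 0 by nra.
by move=> u0 _; apply: sq_eq0; rewrite -/a hu u0 mul0r.
Qed.
End LA.

Section Ric.
Variables (R : realFieldType) (n m : nat) (Q : 'M[R]_n) (Rm : 'M[R]_m).
Hypothesis hQ : psd Q.
Hypothesis hR : pdm Rm.

Lemma Rm_unit : Rm \in unitmx.
Proof.
apply: unit_of_ker => x hx; apply/eqP; apply/negPn/negP => xn0.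
have := (proj2 hR) x xn0; by rewrite -mulmxA hx mulmx0 mxE ltxx.
Qed.

Lemma iRm_sym : (invmx Rm)^T = invmx Rm.
Proof. by rewrite trmx_inv (proj1 hR). Qed.

Lemma SB_sym (B : 'M[R]_(n,m)) : (SB Rm B)^T = SB Rm B.
Proof. by rewrite /SB !trmx_mul trmxK iRm_sym mulmxA. Qed.

Lemma SB_psd (B : 'M[R]_(n,m)) (x : 'cV[R]_n) : 0 <= (x^T *m SB Rm B *m x) 0 0.
Proof.
rewrite /SB.
set z := B^T *m x.
have -> : x^T *m (B *m invmx Rm *m B^T) *m x = z^T *m invmx Rm *m z.
  by rewrite /z trmx_mul trmxK !mulmxA.
set w := invmx Rm *m z.
have hz : z = Rm *m w by rewrite /w mulKVmx // Rm_unit.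
rewrite -mulmxA -/w {1}hz trmx_mul (proj1 hR).
have [->|wn0] := eqVneq w 0; first by rewrite mulmx0 mxE.
exact/ltW/(proj2 hR).
Qed.

Lemma unit_SP (S P : 'M[R]_n) : S^T = S -> (forall x : 'cV_n, 0 <= (x^T *m S *m x) 0 0) ->
  psd P -> (1%:M + S *m P) \in unitmx.
Proof.
move=> Ss Sp [Ps Pp]; apply: unit_of_ker => x.
rewrite mulmxDl mul1mx => /eqP; rewrite addr_eq0 => /eqP hx.
set u := P *m x.
have e : (x^T *m P *m x) 0 0 = - (u^T *m S *m u) 0 0.
  rewrite {2}hx /u trmx_mul Ps mulmxN -!mulmxA mxE.
  by apply: f_equal; rewrite !mulmxA.
have q0 : (x^T *m P *m x) 0 0 = 0.
  by apply/eqP; rewrite eq_le Pp andbT e oppr_le0 Sp.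
have h := @psd_ker _ _ _ x Ps Pp q0.
by rewrite hx -mulmxA h mulmx0 oppr0.
Qed.

Lemma trIP (S P : 'M[R]_n) : S^T = S -> P^T = P ->
  (1%:M + S *m P)^T = 1%:M + P *m S.
Proof. by move=> Ss Ps; rewrite trD trmx1 trmx_mul Ss Ps. Qed.

Lemma push (S P : 'M[R]_n) : (1%:M + S *m P) \in unitmx ->
  (1%:M + P *m S) \in unitmx ->
  P *m invmx (1%:M + S *m P) = invmx (1%:M + P *m S) *m P.
Proof.
move=> u1 u2.
have e : (1%:M + P *m S) *m P = P *m (1%:M + S *m P).
  by rewrite mulmxDl mulmxDr mul1mx mulmx1 mulmxA.
apply: (canRL (mulKmx u2)).
by rewrite mulmxA e -mulmxA mulmxV // mulmx1.
Qed.

Lemma ric_psd (A : 'M[R]_n) (B : 'M[R]_(n,m)) (P : 'M[R]_n) : psd P -> psd (ric Q Rm A B P).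
Proof.
move=> hP; have [Ps Pp] := hP.
have u1 := @unit_SP _ P (SB_sym B) (@SB_psd B) hP.
have u2 : (1%:M + P *m SB Rm B) \in unitmx by rewrite -trIP ?SB_sym // unitmx_tr.
split.
  rewrite /ric trD (proj1 hQ) !trmx_mul trmxK trmx_inv trIP ?SB_sym // Ps.
  by rewrite [invmx _ *m (P *m A)]mulmxA -push // !mulmxA.
move=> x; rewrite /ric -mulmxA mulmxDl mulmxDr !mulmxA mxE.
apply: addr_ge0; last exact: (proj2 hQ).
set y := A *m x.
have -> : x^T *m A^T *m P *m invmx (1%:M + SB Rm B *m P) *m A *m x
   = y^T *m P *m invmx (1%:M + SB Rm B *m P) *m y.
  by rewrite /y trmx_mul !mulmxA.
set z := invmx (1%:M + SB Rm B *m P) *m y.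
have hy : y = (1%:M + SB Rm B *m P) *m z by rewrite /z mulKVmx.
rewrite -mulmxA -/z {1}hy trmx_mul trIP ?SB_sym // mulmxDr mulmx1 !mulmxDl mxE.
apply: addr_ge0; first exact: Pp.
have -> : z^T *m (P *m SB Rm B) *m P *m z = (P *m z)^T *m SB Rm B *m (P *m z).
  by rewrite [(P *m z)^T]trmx_mul Ps !mulmxA.
exact: SB_psd.
Qed.

Lemma iter_psd (A : 'M[R]_n) (B : 'M[R]_(n,m)) k (P : 'M[R]_n) : psd P -> psd (ric_iter Q Rm A B k P).
Proof. by move=> hP; elim: k => //= k IH; apply: ric_psd. Qed.

End Ric.

Section Main.
Variables (R : realFieldType) (n m : nat) (Q : 'M[R]_n) (Rm : 'M[R]_m).
Variables (As Ah : 'M[R]_n) (Bs Bh : 'M[R]_(n, m)).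
Hypothesis hQ : psd Q.
Hypothesis hR : pdm Rm.

Lemma keyE (P1 P2 S Sh : 'M[R]_n) :
  P1 *m (1%:M + S *m P2) =
  (P1 - P2) *m (1%:M + (S - Sh) *m P2) + (1%:M + P1 *m Sh) *m P2
  + P2 *m (S - Sh) *m P2.
Proof.
rewrite !(mulmxDr, mulmxDl, mulmxBr, mulmxBl, mulmx1, mul1mx, mulmxA, mulmxN, mulNmx).
move: (P1 *m S *m P2) (P2 *m S *m P2) (P1 *m Sh *m P2) (P2 *m Sh *m P2) => c d e f.
by apply/matrixP => i j; rewrite !mxE; ring.
Qed.

Lemma distr3 (a X Y Z b : 'M[R]_n) :
  a *m (X + Y + Z) *m b = a *m X *m b + a *m Y *m b + a *m Z *m b.
Proof. by rewrite !mulmxDr !mulmxDl. Qed.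

Lemma zmod_lem (t1 t2 t3 c q : 'M[R]_n) :
  t1 + t2 + t3 + q - (c + q) = t1 + (t2 - c + t3).
Proof. by apply/matrixP => i j; rewrite !mxE; ring. Qed.

Lemma K_abs (P1 P2 S Sh iU2 iU3 : 'M[R]_n) :
  iU2 *m (1%:M + P1 *m Sh) = 1%:M -> (1%:M + S *m P2) *m iU3 = 1%:M ->
  iU2 *m P1 =
    iU2 *m (P1 - P2) *m (1%:M + (S - Sh) *m P2) *m iU3
    + P2 *m iU3
    + iU2 *m P2 *m (S - Sh) *m P2 *m iU3.
Proof.
move=> h2 h3.
have -> : iU2 *m P1 = iU2 *m (P1 *m (1%:M + S *m P2)) *m iU3.
  by rewrite -mulmxA -[P1 *m _ *m _]mulmxA h3 mulmx1.
rewrite (keyE P1 P2 S Sh) distr3 (mulmxA iU2 (1%:M + P1 *m Sh) P2) h2 mul1mx.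
by rewrite !mulmxA.
Qed.

Lemma step (P1 P2 : 'M[R]_n) : psd P1 -> psd P2 ->
  ric Q Rm Ah Bh P1 - ric Q Rm As Bs P2 =
  (Lcl Rm Ah Bh P1)^T *m (P1 - P2) *m Lbar Rm As Ah Bs Bh P2
  + Mm Rm As Ah Bs Bh P1 P2.
Proof.
move=> h1 h2.
have [P1s _] := h1; have [P2s _] := h2.
have u1 := @unit_SP _ _ _ P1 (@SB_sym _ _ _ _ hR Bh) (@SB_psd _ _ _ _ hR Bh) h1.
have u3 := @unit_SP _ _ _ P2 (@SB_sym _ _ _ _ hR Bs) (@SB_psd _ _ _ _ hR Bs) h2.
have u2 : (1%:M + P1 *m SB Rm Bh) \in unitmx.
  by rewrite -trIP ?(@SB_sym _ _ _ _ hR) // unitmx_tr.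
set Sh := SB Rm Bh in u1 u2 *; set S := SB Rm Bs in u3 *.
have hL : Lbar Rm As Ah Bs Bh P2
    = (1%:M + (S - Sh) *m P2) *m invmx (1%:M + S *m P2) *m Ah.
  by rewrite /Lbar /Wm /Hm /Lcl -/S -/Sh -mulmxDr subrK mulmxA.
have hT : (Lcl Rm Ah Bh P1)^T = Ah^T *m invmx (1%:M + P1 *m Sh).
  by rewrite /Lcl trmx_mul trmx_inv trIP ?(@SB_sym _ _ _ _ hR).
have K := @K_abs P1 P2 S Sh _ _ (mulVmx u2) (mulmxV u3).
rewrite hL hT /ric /Mm -/S -/Sh.
have -> : Ah^T *m P1 *m invmx (1%:M + Sh *m P1) *m Ah
   = Ah^T *m (P1 *m invmx (1%:M + Sh *m P1)) *m Ah by rewrite !mulmxA.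
rewrite push // K distr3 !mulmxA.
by rewrite zmod_lem.
Qed.
End Main.

Section Iter.
Variables (R : realFieldType) (n : nat).
Lemma foldr_mul (F : nat -> 'M[R]_n) s (Y : 'M[R]_n) :
  foldr (fun k acc => F k *m acc) 1%:M s *m Y = foldr (fun k acc => F k *m acc) Y s.
Proof. by elim: s => [|a s IH] /=; rewrite ?mul1mx // -mulmxA IH. Qed.

Lemma foldr_S (F : nat -> 'M[R]_n) j i : (j <= i)%N ->
  foldr (fun k acc => F k *m acc) 1%:M (iota j (i.+1 - j))
  = foldr (fun k acc => F k *m acc) 1%:M (iota j (i - j)) *m F i.
Proof.
move=> ji; rewrite subSn // -addn1 iotaD foldr_cat subnKC //= mulmx1.
by rewrite foldr_mul.
Qed.
End Iter.

Lemma fin_lem (R : realFieldType) (n : nat) (L A X B S M Lb : 'M[R]_n) :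
  L *m (A *m X *m B + S) *m Lb + M = L *m A *m X *m (B *m Lb) + (M + L *m S *m Lb).
Proof. by rewrite mulmxDr mulmxDl !mulmxA -addrA (addrC _ M). Qed.

Lemma Phi_S (R : realFieldType) (n m : nat) (Q : 'M[R]_n) (Rm : 'M[R]_m)
  (A : 'M[R]_n) (B : 'M[R]_(n, m)) j i P : (j <= i)%N ->
  Phi Q Rm A B j i.+1 P = Phi Q Rm A B j i P *m Lcl Rm A B (ric_iter Q Rm A B i P).
Proof. by move=> ji; rewrite /Phi foldr_S. Qed.

Lemma Phibar_S (R : realFieldType) (n m : nat) (Q : 'M[R]_n) (Rm : 'M[R]_m)
  (As Ah : 'M[R]_n) (Bs Bh : 'M[R]_(n, m)) j i P : (j <= i)%N ->
  Phibar Q Rm As Ah Bs Bh j i.+1 P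
  = Phibar Q Rm As Ah Bs Bh j i P *m Lbar Rm As Ah Bs Bh (ric_iter Q Rm As Bs i P).
Proof. by move=> ji; rewrite /Phibar foldr_S. Qed.

Theorem lemma3 (R : realFieldType) (n m : nat) (Q : 'M[R]_n) (Rm : 'M[R]_m)
  (As Ah : 'M[R]_n) (Bs Bh : 'M[R]_(n, m)) (P1 P2 : 'M[R]_n) (i : nat) :
  psd Q -> pdm Rm -> psd P1 -> psd P2 ->
  ric_iter Q Rm Ah Bh i P1 - ric_iter Q Rm As Bs i P2 =
    (Phi Q Rm Ah Bh 0 i P1)^T *m (P1 - P2) *m Phibar Q Rm As Ah Bs Bh 0 i P2
    + \sum_(1 <= j < i.+1)
        (Phi Q Rm Ah Bh (i - j).+1 i P1)^T
        *m Mm Rm As Ah Bs Bh (ric_iter Q Rm Ah Bh (i - j) P1)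
                             (ric_iter Q Rm As Bs (i - j) P2)
        *m Phibar Q Rm As Ah Bs Bh (i - j).+1 i P2.
Proof.
move=> hQ hR h1 h2.
elim: i => [|i IH].
  by rewrite big_geq // /Phi /Phibar /= trmx1 mul1mx mulmx1 addr0.
have -> : ric_iter Q Rm Ah Bh i.+1 P1 - ric_iter Q Rm As Bs i.+1 P2
  = (Lcl Rm Ah Bh (ric_iter Q Rm Ah Bh i P1))^T
     *m (ric_iter Q Rm Ah Bh i P1 - ric_iter Q Rm As Bs i P2)
     *m Lbar Rm As Ah Bs Bh (ric_iter Q Rm As Bs i P2)
    + Mm Rm As Ah Bs Bh (ric_iter Q Rm Ah Bh i P1) (ric_iter Q Rm As Bs i P2).
  by apply: step => //; apply: iter_psd.
rewrite IH.
rewrite [in RHS]big_nat_recl // /= !subSS !subn0.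
have -> : Phi Q Rm Ah Bh i.+1 i.+1 P1 = 1%:M by rewrite /Phi subnn.
have -> : Phibar Q Rm As Ah Bs Bh i.+1 i.+1 P2 = 1%:M by rewrite /Phibar subnn.
rewrite trmx1 mul1mx mulmx1 Phi_S // Phibar_S // [in RHS]trmx_mul.
rewrite [X in _ = _ + (_ + X)](eq_big_nat _ _ (F2 := fun j =>
   (Lcl Rm Ah Bh (ric_iter Q Rm Ah Bh i P1))^T *m
   ((Phi Q Rm Ah Bh (i - j).+1 i P1)^T
        *m Mm Rm As Ah Bs Bh (ric_iter Q Rm Ah Bh (i - j) P1)
                             (ric_iter Q Rm As Bs (i - j) P2)
        *m Phibar Q Rm As Ah Bs Bh (i - j).+1 i P2)
   *m Lbar Rm As Ah Bs Bh (ric_iter Q Rm As Bs i P2))); last first.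
  move=> j /andP [j1 ji].
  have hj : (i - j < i)%N by lia.
  by rewrite subSS Phi_S ?Phibar_S ?trmx_mul ?mulmxA.
rewrite -mulmx_suml -mulmx_sumr.
exact: fin_lem.
Qed.
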